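(* Consider the planar Maxwell-ring potential described in the context with $\mu=0$ and $\alpha\ge 1$. Then the origin $u_0=0$ is a critical point of $V$. Moreover, for $n\ge3$, $D^2V(0)=\lambda I$ for some $\lambda>0$.
   Context: Let $n\ge 2$, $\zeta=2\pi/n$, $\mu\ge0$, $\phi_\alpha'(r)=-r^{-\alpha}$, and $s=2^{-\alpha}\sum_{j=1}^{n-1}\sin^{-(\alpha-1)}(j\zeta/2)$. The (rescaled) planar potential of a satellite attracted by $n$ unit masses at the vertices $e^{ij\zeta}$ of a regular polygon and a central mass $\mu$ at $0$ (identifying $\mathbb{R}^2=\mathbb{C}$) is $$V(u)=\frac12\|u\|^2+\sum_{j=1}^n\frac1{s+\mu}\phi_\alpha(\|u-e^{ij\zeta}\|)+\frac{\mu}{s+\mu}\phi_\alpha(\|u\|);$$ for $\mu=0$ the last term is absent. *)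

(* Defs.v *)
From Stdlib Require Import Reals Lra List.
From Coquelicot Require Import Coquelicot.
Import ListNotations.
Open Scope R_scope.

Definition zeta (n : nat) : R := 2 * PI / INR n.

(* An antiderivative of phi_alpha'(r) = - r^{-alpha} (for r > 0):
   phi_1(r) = - ln r ;  phi_alpha(r) = r^{1-alpha} / (alpha - 1) for alpha <> 1. *)
Definition phi (alpha r : R) : R :=
  if Req_EM_T alpha 1 then - ln r else Rpower r (1 - alpha) / (alpha - 1).

Definition s_const (n : nat) (alpha : R) : R :=
  Rpower 2 (- alpha) *
  fold_right Rplus 0
    (map (fun j : nat => Rpower (sin (INR j * zeta n / 2)) (- (alpha - 1)))
         (seq 1 (n - 1))).

Definition norm2 (x y : R) : R := sqrt (x * x + y * y).

(* The rescaled planar Maxwell-ring potential V(u), u = (x,y) = x + i y,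
   with n unit masses at e^{i j zeta}, j = 1..n, and central mass mu
   (the central term is absent when mu = 0). *)
Definition V (n : nat) (alpha mu : R) (x y : R) : R :=
  / 2 * (x * x + y * y)
  + fold_right Rplus 0
      (map (fun j : nat =>
              / (s_const n alpha + mu) *
              phi alpha (norm2 (x - cos (INR j * zeta n)) (y - sin (INR j * zeta n))))
           (seq 1 n))
  + (if Req_EM_T mu 0 then 0
     else mu / (s_const n alpha + mu) * phi alpha (norm2 x y)).

Definition dV1 (n : nat) (alpha mu : R) (x y : R) : R :=
  Derive (fun t => V n alpha mu t y) x.
Definition dV2 (n : nat) (alpha mu : R) (x y : R) : R :=
  Derive (fun t => V n alpha mu x t) y.

(* Main.v *)
Require Import Defs.
From Stdlib Require Import Reals Lra List Lia.
From Coquelicot Require Import Coquelicot.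
Import ListNotations.
Open Scope R_scope.
Lemma dpl_val f x y a b a' b' : differentiable_pt_lim f x y a b -> a = a' -> b = b' ->
  differentiable_pt_lim f x y a' b'.
Proof. intros H -> ->; exact H. Qed.

Lemma dpl_ext f g x y a b : (forall u v, f u v = g u v) ->
  differentiable_pt_lim f x y a b -> differentiable_pt_lim g x y a b.
Proof.
  intros E H. apply (differentiable_pt_lim_ext f); auto.
  exists (mkposreal 1 Rlt_0_1). intros; auto.
Qed.

Lemma dpl_ext_loc f g x y a b : locally_2d (fun u v => f u v = g u v) x y ->
  differentiable_pt_lim f x y a b -> differentiable_pt_lim g x y a b.
Proof. intros; eapply differentiable_pt_lim_ext; eauto. Qed.

Lemma dpl_trivial f x y a b :
  (forall u v, f u v - f x y - (a * (u - x) + b * (v - y)) = 0) ->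
  differentiable_pt_lim f x y a b.
Proof.
  intros E eps. exists (mkposreal 1 Rlt_0_1). intros u v _ _.
  rewrite E, Rabs_R0. apply Rmult_le_pos. destruct eps; simpl; lra.
  unfold Rmax; destruct Rle_dec; apply Rabs_pos.
Qed.

Lemma dpl_cst k x y : differentiable_pt_lim (fun _ _ => k) x y 0 0.
Proof. apply dpl_trivial; intros; ring. Qed.
Lemma dpl_p1 x y : differentiable_pt_lim (fun u _ => u) x y 1 0.
Proof. apply dpl_trivial; intros; ring. Qed.
Lemma dpl_p2 x y : differentiable_pt_lim (fun _ v => v) x y 0 1.
Proof. apply dpl_trivial; intros; ring. Qed.
Lemma dpl_Rplus p q : differentiable_pt_lim Rplus p q 1 1.
Proof. apply dpl_trivial; intros; ring. Qed.

Lemma dpl_Rmult p q : differentiable_pt_lim Rmult p q q p.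
Proof.
  intros eps. exists eps. intros u v Hu Hv.
  replace (u * v - p * q - (q * (u - p) + p * (v - q))) with ((u - p) * (v - q)) by ring.
  rewrite Rabs_mult.
  assert (Hm : Rabs (v - q) <= Rmax (Rabs (u - p)) (Rabs (v - q))) by apply Rmax_r.
  apply Rmult_le_compat; try apply Rabs_pos; lra.
Qed.

Lemma dpl_plus f g x y a b a' b' :
  differentiable_pt_lim f x y a b -> differentiable_pt_lim g x y a' b' ->
  differentiable_pt_lim (fun u v => f u v + g u v) x y (a + a') (b + b').
Proof.
  intros Hf Hg. apply dpl_val with (1*a+1*a') (1*b+1*b'); [|ring|ring].
  apply (differentiable_pt_lim_comp Rplus f g); auto. apply dpl_Rplus.
Qed.

Lemma dpl_mult f g x y a b a' b' :
  differentiable_pt_lim f x y a b -> differentiable_pt_lim g x y a' b' ->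
  differentiable_pt_lim (fun u v => f u v * g u v) x y (g x y * a + f x y * a') (g x y * b + f x y * b').
Proof.
  intros Hf Hg. apply dpl_val with (g x y*a+f x y*a') (g x y*b+f x y*b'); [|ring|ring].
  apply (differentiable_pt_lim_comp Rmult f g); auto. apply dpl_Rmult.
Qed.

Lemma dpl_comp1 (h : R -> R) f x y d a b :
  derivable_pt_lim h (f x y) d -> differentiable_pt_lim f x y a b ->
  differentiable_pt_lim (fun u v => h (f u v)) x y (d * a) (d * b).
Proof.
  intros Hh Hf. apply dpl_val with (d*a+0*a) (d*b+0*b); [|ring|ring].
  apply (differentiable_pt_lim_comp (fun p _ => h p) f f); auto.
  apply differentiable_pt_lim_proj1_0; exact Hh.
Qed.

Lemma dpl_fold (l : list nat) (f : nat -> R -> R -> R) (ax ay : nat -> R) x y :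
  (forall j, In j l -> differentiable_pt_lim (f j) x y (ax j) (ay j)) ->
  differentiable_pt_lim (fun u v => fold_right Rplus 0 (map (fun j => f j u v) l)) x y
    (fold_right Rplus 0 (map ax l)) (fold_right Rplus 0 (map ay l)).
Proof.
  induction l as [|j l IH]; intros H; simpl.
  - apply dpl_cst.
  - apply (dpl_plus (f j) (fun u v => fold_right Rplus 0 (map (fun j => f j u v) l))).
    apply H; simpl; auto. apply IH; intros; apply H; simpl; auto.
Qed.

Lemma D_lin c x y : differentiable_pt_lim (fun u _ => u - c) x y 1 0.
Proof. apply dpl_trivial; intros; ring. Qed.
Lemma D_lin2 d x y : differentiable_pt_lim (fun _ v => v - d) x y 0 1.
Proof. apply dpl_trivial; intros; ring. Qed.

Lemma D_q c d x y : differentiable_pt_lim (fun u v => (u-c)*(u-c)+(v-d)*(v-d)) x y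
   (2*(x-c)) (2*(y-d)).
Proof.
  eapply dpl_val.
  apply (dpl_plus (fun u v => (u-c)*(u-c)) (fun u v => (v-d)*(v-d))).
  apply (dpl_mult (fun u v => u-c) (fun u v => u-c)); apply D_lin.
  apply (dpl_mult (fun u v => v-d) (fun u v => v-d)); apply D_lin2.
  simpl; ring. simpl; ring.
Qed.

Lemma D_norm c d x y : 0 < (x-c)*(x-c)+(y-d)*(y-d) ->
  differentiable_pt_lim (fun u v => norm2 (u-c) (v-d)) x y
    ((x-c)/norm2 (x-c) (y-d)) ((y-d)/norm2 (x-c) (y-d)).
Proof.
  intros Hq. unfold norm2.
  assert (Hs : 0 < sqrt ((x-c)*(x-c)+(y-d)*(y-d))) by (apply sqrt_lt_R0; exact Hq).
  eapply dpl_val.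
  apply (dpl_comp1 sqrt (fun u v => (u-c)*(u-c)+(v-d)*(v-d))).
  apply derivable_pt_lim_sqrt; exact Hq. apply D_q.
  field; lra. field; lra.
Qed.

Lemma D_phi1 alpha r : 0 < r -> derivable_pt_lim (phi alpha) r (- Rpower r (- alpha)).
Proof.
  intros Hr. unfold phi. destruct (Req_EM_T alpha 1) as [->|Ha].
  - replace (- Rpower r (-(1))) with (-1 * / r).
    apply derivable_pt_lim_ext with (mult_real_fct (-1) ln).
    intros; unfold mult_real_fct; ring.
    apply (derivable_pt_lim_scal ln (-1) r (/ r)). now apply derivable_pt_lim_ln.
    rewrite Rpower_Ropp, Rpower_1 by exact Hr. ring.
  - replace (- Rpower r (- alpha)) with (/ (alpha - 1) * ((1 - alpha) * Rpower r (1 - alpha - 1))).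
    + apply derivable_pt_lim_ext with (fun x => / (alpha - 1) * Rpower x (1 - alpha)).
      intros; unfold Rdiv; ring.
      apply (derivable_pt_lim_scal (fun x => Rpower x (1 - alpha))). now apply derivable_pt_lim_power.
    + replace (1 - alpha - 1) with (- alpha) by ring. field. intro; apply Ha; lra.
Qed.

Lemma D_phi alpha c d x y : 0 < (x-c)*(x-c)+(y-d)*(y-d) ->
  differentiable_pt_lim (fun u v => phi alpha (norm2 (u-c) (v-d))) x y
    (- Rpower (norm2 (x-c) (y-d)) (- alpha) / norm2 (x-c) (y-d) * (x-c))
    (- Rpower (norm2 (x-c) (y-d)) (- alpha) / norm2 (x-c) (y-d) * (y-d)).
Proof.
  intros Hq.
  assert (Hs : 0 < norm2 (x-c) (y-d)) by (apply sqrt_lt_R0; exact Hq).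
  eapply dpl_val.
  apply (dpl_comp1 (phi alpha) (fun u v => norm2 (u-c) (v-d))).
  apply D_phi1; exact Hs. apply D_norm; exact Hq.
  unfold Rdiv; ring. unfold Rdiv; ring.
Qed.

Lemma Rpower_1_l x : Rpower 1 x = 1.
Proof. unfold Rpower; rewrite ln_1, Rmult_0_r; apply exp_0. Qed.

Lemma D_h alpha : derivable_pt_lim (fun r => - Rpower r (- alpha) / r) 1 (alpha + 1).
Proof.
  apply derivable_pt_lim_ext with (div_fct (opp_fct (fun r => Rpower r (- alpha))) id).
  intros; unfold div_fct, opp_fct, id; reflexivity.
  assert (H := derivable_pt_lim_div (opp_fct (fun r => Rpower r (- alpha))) id 1
     (- ((- alpha) * Rpower 1 (- alpha - 1))) 1).
  match type of H with _ -> _ -> _ -> derivable_pt_lim _ _ ?L => replace (alpha + 1) with L end.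
  apply H.
  apply derivable_pt_lim_opp. apply derivable_pt_lim_power; lra.
  apply derivable_pt_lim_id. unfold id; lra.
  unfold opp_fct, id, Rsqr. rewrite !Rpower_1_l. field.
Qed.

Lemma norm_at0 c d : c*c+d*d = 1 -> norm2 (0-c) (0-d) = 1.
Proof. intros H; unfold norm2. replace ((0-c)*(0-c)+(0-d)*(0-d)) with 1 by lra. apply sqrt_1. Qed.

Lemma D_H1 alpha c d : c*c+d*d = 1 ->
  differentiable_pt_lim (fun u v => - Rpower (norm2 (u-c) (v-d)) (- alpha) / norm2 (u-c) (v-d) * (u - c)) 0 0
   ((alpha+1)*c*c - 1) ((alpha+1)*c*d).
Proof.
  intros H. 
  assert (Hq : 0 < (0-c)*(0-c)+(0-d)*(0-d)) by lra.
  pose proof (norm_at0 c d H) as N.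
  eapply dpl_val.
  apply (dpl_mult (fun u v => - Rpower (norm2 (u-c) (v-d)) (- alpha) / norm2 (u-c) (v-d)) (fun u v => u - c)).
  2: apply D_lin.
  apply (dpl_comp1 (fun r => - Rpower r (- alpha) / r) (fun u v => norm2 (u-c) (v-d))).
  rewrite N; apply D_h. apply D_norm; exact Hq.
  all: cbv beta; rewrite N, Rpower_1_l; field.
Qed.

Lemma D_H2 alpha c d : c*c+d*d = 1 ->
  differentiable_pt_lim (fun u v => - Rpower (norm2 (u-c) (v-d)) (- alpha) / norm2 (u-c) (v-d) * (v - d)) 0 0
   ((alpha+1)*c*d) ((alpha+1)*d*d - 1).
Proof.
  intros H. 
  assert (Hq : 0 < (0-c)*(0-c)+(0-d)*(0-d)) by lra.
  pose proof (norm_at0 c d H) as N.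
  eapply dpl_val.
  apply (dpl_mult (fun u v => - Rpower (norm2 (u-c) (v-d)) (- alpha) / norm2 (u-c) (v-d)) (fun u v => v - d)).
  2: apply D_lin2.
  apply (dpl_comp1 (fun r => - Rpower r (- alpha) / r) (fun u v => norm2 (u-c) (v-d))).
  rewrite N; apply D_h. apply D_norm; exact Hq.
  all: cbv beta; rewrite N, Rpower_1_l; field.
Qed.
Definition fsum (f : nat -> R) (l : list nat) := fold_right Rplus 0 (map f l).

Lemma fsum_app f l1 l2 : fsum f (l1 ++ l2) = fsum f l1 + fsum f l2.
Proof. unfold fsum; induction l1; simpl; [ring|rewrite IHl1; ring]. Qed.

Lemma fsum_ext f g l : (forall j, In j l -> f j = g j) -> fsum f l = fsum g l.
Proof. unfold fsum; induction l; simpl; intros H; auto. rewrite H, IHl; auto. Qed.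

Lemma fsum_plus f g l : fsum (fun j => f j + g j) l = fsum f l + fsum g l.
Proof. unfold fsum; induction l; simpl; [ring|rewrite IHl; ring]. Qed.

Lemma fsum_scal c f l : fsum (fun j => c * f j) l = c * fsum f l.
Proof. unfold fsum; induction l; simpl; [ring|rewrite IHl; ring]. Qed.

Lemma fsum_const c l : fsum (fun _ => c) l = c * INR (length l).
Proof. unfold fsum; induction l; simpl length; [simpl; ring|rewrite S_INR; simpl; rewrite IHl; ring]. Qed.

Lemma tele_cos b m : 2 * sin b * fsum (fun j => cos (INR j * (2*b))) (seq 1 m)
   = sin ((2 * INR m + 1) * b) - sin b.
Proof.
  induction m.
  - unfold fsum; simpl. replace ((2*0+1)*b) with b by ring. ring.
  - rewrite seq_S, fsum_app, Rmult_plus_distr_l, IHm. unfold fsum; cbn [map fold_right].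
    rewrite ?plus_INR, ?S_INR. change (INR 0) with 0.
    set (X := (2 * INR m + 2) * b).
    replace ((0 + 1 + INR m) * (2*b)) with X by (unfold X; ring).
    replace ((2 * (INR m + 1) + 1) * b) with (X + b) by (unfold X; ring).
    replace ((2 * INR m + 1) * b) with (X - b) by (unfold X; ring).
    rewrite sin_plus, sin_minus. ring.
Qed.

Lemma tele_sin b m : 2 * sin b * fsum (fun j => sin (INR j * (2*b))) (seq 1 m)
   = cos b - cos ((2 * INR m + 1) * b).
Proof.
  induction m.
  - unfold fsum; simpl. replace ((2*0+1)*b) with b by ring. ring.
  - rewrite seq_S, fsum_app, Rmult_plus_distr_l, IHm. unfold fsum; cbn [map fold_right].
    rewrite ?plus_INR, ?S_INR. change (INR 0) with 0.
    set (X := (2 * INR m + 2) * b).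
    replace ((0 + 1 + INR m) * (2*b)) with X by (unfold X; ring).
    replace ((2 * (INR m + 1) + 1) * b) with (X + b) by (unfold X; ring).
    replace ((2 * INR m + 1) * b) with (X - b) by (unfold X; ring).
    rewrite cos_plus, cos_minus. ring.
Qed.

Lemma sums_zero b m : sin b <> 0 -> cos (INR m * (2*b)) = 1 -> sin (INR m * (2*b)) = 0 ->
  fsum (fun j => cos (INR j * (2*b))) (seq 1 m) = 0 /\
  fsum (fun j => sin (INR j * (2*b))) (seq 1 m) = 0.
Proof.
  intros Hb Hc Hs.
  assert (E : (2 * INR m + 1) * b = INR m * (2*b) + b) by ring.
  pose proof (tele_cos b m) as T1. pose proof (tele_sin b m) as T2.
  rewrite E, sin_plus, Hc, Hs in T1. rewrite E, cos_plus, Hc, Hs in T2.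
  split.
  - apply (Rmult_eq_reg_l (2 * sin b)); [|intro; apply Hb; lra]. rewrite T1; ring.
  - apply (Rmult_eq_reg_l (2 * sin b)); [|intro; apply Hb; lra]. rewrite T2; ring.
Qed.

Definition cc n j := cos (INR j * zeta n).
Definition dd n j := sin (INR j * zeta n).
Definition G1 n alpha x y := x + fsum (fun j => /(s_const n alpha + 0) *
  (- Rpower (norm2 (x - cc n j) (y - dd n j)) (-alpha) / norm2 (x - cc n j) (y - dd n j) * (x - cc n j))) (seq 1 n).
Definition G2 n alpha x y := y + fsum (fun j => /(s_const n alpha + 0) *
  (- Rpower (norm2 (x - cc n j) (y - dd n j)) (-alpha) / norm2 (x - cc n j) (y - dd n j) * (y - dd n j))) (seq 1 n).

Lemma DV n alpha x y :
  (forall j, In j (seq 1 n) -> 0 < (x - cc n j)*(x - cc n j) + (y - dd n j)*(y - dd n j)) ->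
  differentiable_pt_lim (V n alpha 0) x y (G1 n alpha x y) (G2 n alpha x y).
Proof.
  intros Hq.
  set (K := /(s_const n alpha + 0)).
  apply dpl_ext with (fun u v => /2*(u*u+v*v) + fsum (fun j => K * phi alpha (norm2 (u - cc n j) (v - dd n j))) (seq 1 n)).
  { intros u v; unfold V, fsum, cc, dd, K. destruct (Req_EM_T 0 0) as [_|E]; [ring|now elim E]. }
  eapply dpl_val.
  apply (dpl_plus (fun u v => /2*(u*u+v*v)) (fun u v => fsum (fun j => K * phi alpha (norm2 (u - cc n j) (v - dd n j))) (seq 1 n))).
  - apply (dpl_mult (fun _ _ => /2) (fun u v => u*u+v*v)). apply dpl_cst.
    apply (dpl_plus (fun u v => u*u) (fun u v => v*v)).
    apply (dpl_mult (fun u v => u) (fun u v => u)); apply dpl_p1.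
    apply (dpl_mult (fun u v => v) (fun u v => v)); apply dpl_p2.
  - unfold fsum. apply dpl_fold. intros j Hj.
    apply (dpl_mult (fun _ _ => K) (fun u v => phi alpha (norm2 (u - cc n j) (v - dd n j)))).
    apply dpl_cst. apply D_phi. auto.
  - unfold G1, fsum. fold K. f_equal. field. 
    f_equal. apply map_ext; intros; ring.
  - unfold G2, fsum. fold K. f_equal. field. 
    f_equal. apply map_ext; intros; ring.
Qed.
Lemma ccdd n j : cc n j * cc n j + dd n j * dd n j = 1.
Proof. unfold cc, dd. pose proof (sin2_cos2 (INR j * zeta n)). unfold Rsqr in H. lra. Qed.

Lemma INRn_pos n : (2 <= n)%nat -> 2 <= INR n.
Proof. intros; change 2 with (INR 2); apply le_INR; lia. Qed.

Lemma sums1 n : (2 <= n)%nat -> fsum (cc n) (seq 1 n) = 0 /\ fsum (dd n) (seq 1 n) = 0.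
Proof.
  intros Hn. pose proof (INRn_pos n Hn) as Hn2. pose proof PI_RGT_0.
  assert (Z : zeta n = 2 * (PI / INR n)) by (unfold zeta; field; lra).
  unfold cc, dd. rewrite Z.
  apply sums_zero.
  - apply Rgt_not_eq, sin_gt_0. apply Rdiv_lt_0_compat; lra.
    apply (Rmult_lt_reg_r (INR n)); [lra|]. unfold Rdiv; rewrite Rmult_assoc, Rinv_l by lra. nra.
  - replace (INR n * (2 * (PI / INR n))) with (2*PI) by (field; lra). apply cos_2PI.
  - replace (INR n * (2 * (PI / INR n))) with (2*PI) by (field; lra). apply sin_2PI.
Qed.

Lemma sums2 n : (3 <= n)%nat -> fsum (fun j => cos (2 * (INR j * zeta n))) (seq 1 n) = 0 /\
   fsum (fun j => sin (2 * (INR j * zeta n))) (seq 1 n) = 0.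
Proof.
  intros Hn. assert (Hn2 : 3 <= INR n) by (replace 3 with (INR 3) by (simpl; ring); apply le_INR; lia).
  pose proof PI_RGT_0.
  assert (Z : forall j, 2 * (INR j * zeta n) = INR j * (2 * (2 * PI / INR n))) by (intros; unfold zeta; field; lra).
  rewrite !(fsum_ext _ _ _ (fun j _ => f_equal cos (Z j))), !(fsum_ext _ _ _ (fun j _ => f_equal sin (Z j))).
  apply sums_zero.
  - apply Rgt_not_eq, sin_gt_0. apply Rdiv_lt_0_compat; lra.
    apply (Rmult_lt_reg_r (INR n)); [lra|]. unfold Rdiv; rewrite Rmult_assoc, Rinv_l by lra. nra.
  - replace (INR n * (2 * (2 * PI / INR n))) with (2*PI + 2*PI) by (field; lra).
    rewrite cos_plus, cos_2PI, sin_2PI; ring.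
  - replace (INR n * (2 * (2 * PI / INR n))) with (2*PI + 2*PI) by (field; lra).
    rewrite sin_plus, cos_2PI, sin_2PI; ring.
Qed.

Lemma sums3 n : (3 <= n)%nat ->
  fsum (fun j => cc n j * cc n j) (seq 1 n) = INR n / 2 /\
  fsum (fun j => dd n j * dd n j) (seq 1 n) = INR n / 2 /\
  fsum (fun j => cc n j * dd n j) (seq 1 n) = 0.
Proof.
  intros Hn. destruct (sums2 n Hn) as [A B].
  split; [|split].
  - rewrite (fsum_ext _ (fun j => /2 * cos (2 * (INR j * zeta n)) + /2)).
    rewrite fsum_plus, fsum_scal, fsum_const, A, length_seq. field.
    intros j _. unfold cc. rewrite cos_2a_cos. field.
  - rewrite (fsum_ext _ (fun j => (-/2) * cos (2 * (INR j * zeta n)) + /2)).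
    rewrite fsum_plus, fsum_scal, fsum_const, A, length_seq. field.
    intros j _. unfold dd. rewrite cos_2a_sin. field.
  - rewrite (fsum_ext _ (fun j => /2 * sin (2 * (INR j * zeta n)))).
    rewrite fsum_scal, B. ring.
    intros j _. unfold cc, dd. rewrite sin_2a. field.
Qed.

Lemma loc_pos n : locally_2d (fun u v => forall j, In j (seq 1 n) ->
   0 < (u - cc n j)*(u - cc n j) + (v - dd n j)*(v - dd n j)) 0 0.
Proof.
  exists (mkposreal (/2) ltac:(lra)). simpl. intros u v Hu Hv j _.
  rewrite Rminus_0_r in Hu, Hv. pose proof (ccdd n j).
  apply Rabs_def2 in Hu. apply Rabs_def2 in Hv.
  assert (0 <= (2*u - cc n j)*(2*u - cc n j)) by apply Rle_0_sqr.
  assert (0 <= (2*v - dd n j)*(2*v - dd n j)) by apply Rle_0_sqr.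
  nra.
Qed.

Lemma fold_nonneg (f : nat -> R) l : (forall j, 0 < f j) -> 0 <= fold_right Rplus 0 (map f l).
Proof. intros H; induction l; simpl. lra. pose proof (H a); lra. Qed.

Lemma s_pos n alpha : (2 <= n)%nat -> 0 < s_const n alpha.
Proof.
  intros Hn. unfold s_const. apply Rmult_lt_0_compat. apply exp_pos.
  destruct n as [|[|m]]; try lia. replace (S (S m) - 1)%nat with (S m) by lia.
  simpl. apply Rplus_lt_le_0_compat. apply exp_pos.
  apply fold_nonneg. intros; apply exp_pos.
Qed.

Theorem mainTheorem7 (n : nat) (alpha : R) :
  (2 <= n)%nat -> 1 <= alpha ->
  differentiable_pt_lim (V n alpha 0) 0 0 0 0 /\
  ((3 <= n)%nat ->
   exists lambda : R, 0 < lambda /\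
     differentiable_pt_lim (dV1 n alpha 0) 0 0 lambda 0 /\
     differentiable_pt_lim (dV2 n alpha 0) 0 0 0 lambda).
Proof.
  intros Hn Ha.
  set (K := / (s_const n alpha + 0)).
  assert (HK : 0 < K) by (unfold K; rewrite Rplus_0_r; apply Rinv_0_lt_compat, s_pos; auto).
  destruct (sums1 n Hn) as [S1 S2].
  split.
  - eapply dpl_val. apply DV.
    intros j _. pose proof (ccdd n j). nra.
    + unfold G1. fold K. rewrite (fsum_ext _ (fun j => K * cc n j)), fsum_scal, S1. ring.
      intros j _. rewrite norm_at0 by apply ccdd. rewrite Rpower_1_l. field.
    + unfold G2. fold K. rewrite (fsum_ext _ (fun j => K * dd n j)), fsum_scal, S2. ring.
      intros j _. rewrite norm_at0 by apply ccdd. rewrite Rpower_1_l. field.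
  - intros Hn3. destruct (sums3 n Hn3) as [C1 [C2 C3]].
    assert (Hn0 : 0 <= INR n) by apply pos_INR.
    exists (1 + K * ((alpha + 1) * (INR n / 2) - INR n)).
    split; [|split].
    + assert (0 <= K * ((alpha + 1) * (INR n / 2) - INR n)); [|lra].
      apply Rmult_le_pos; nra.
    + apply dpl_ext_loc with (G1 n alpha).
      { destruct (loc_pos n) as [del Hd]. exists del. intros u v Hu Hv.
        unfold dV1. symmetry. apply (differentiable_pt_lim_unique _ _ _ _ _ (DV n alpha u v (Hd u v Hu Hv))). }
      unfold G1. fold K. eapply dpl_val.
      apply (dpl_plus (fun u v => u)). apply dpl_p1.
      unfold fsum. apply dpl_fold. intros j _.
      apply (dpl_mult (fun _ _ => K)). apply dpl_cst. apply D_H1. apply ccdd.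
      * match goal with |- context [fold_right Rplus 0 (map ?f ?l)] => change (fold_right Rplus 0 (map f l)) with (fsum f l) end.
        rewrite (fsum_ext _ (fun j => (K * (alpha+1)) * (cc n j * cc n j) + (- K))).
        rewrite fsum_plus, fsum_scal, fsum_const, C1, length_seq. ring.
        intros; ring.
      * match goal with |- context [fold_right Rplus 0 (map ?f ?l)] => change (fold_right Rplus 0 (map f l)) with (fsum f l) end.
        rewrite (fsum_ext _ (fun j => (K * (alpha+1)) * (cc n j * dd n j))).
        rewrite fsum_scal, C3. ring.
        intros; ring.
    + apply dpl_ext_loc with (G2 n alpha).
      { destruct (loc_pos n) as [del Hd]. exists del. intros u v Hu Hv.
        unfold dV2. symmetry. apply (differentiable_pt_lim_unique _ _ _ _ _ (DV n alpha u v (Hd u v Hu Hv))). }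
      unfold G2. fold K. eapply dpl_val.
      apply (dpl_plus (fun u v => v)). apply dpl_p2.
      unfold fsum. apply dpl_fold. intros j _.
      apply (dpl_mult (fun _ _ => K)). apply dpl_cst. apply D_H2. apply ccdd.
      * match goal with |- context [fold_right Rplus 0 (map ?f ?l)] => change (fold_right Rplus 0 (map f l)) with (fsum f l) end.
        rewrite (fsum_ext _ (fun j => (K * (alpha+1)) * (cc n j * dd n j))).
        rewrite fsum_scal, C3. ring.
        intros; ring.
      * match goal with |- context [fold_right Rplus 0 (map ?f ?l)] => change (fold_right Rplus 0 (map f l)) with (fsum f l) end.
        rewrite (fsum_ext _ (fun j => (K * (alpha+1)) * (dd n j * dd n j) + (- K))).
        rewrite fsum_plus, fsum_scal, fsum_const, C2, length_seq. ring.
        intros; ring.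
Qed.
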